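(* A pointed $(n+d,d)$-matching field is linkage if and only if its reduction is an $(n,d)$-matching left-semi-ensemble. Consequently, reduction is a bijection between linkage pointed $(n+d,d)$-matching fields and $(n,d)$-matching left-semi-ensembles.
   Context: Let $n,d$ be positive integers, $[\bar d]=\{\bar1,\dots,\bar d\}$, and $[\underline d]=\{\underline1,\dots,\underline d\}$ a further copy of $[d]$. A pointed $(n+d,d)$-matching field assigns to every $d$-element subset $\sigma\subseteq[n]\sqcup[\underline d]$ a bijection $M_\sigma:\sigma\to[\bar d]$ such that $M_\sigma(\underline j)=\bar j$ whenever $\underline j\in\sigma$; each $M_\sigma$ is viewed as a perfect matching graph between $\sigma$ and $[\bar d]$. It is linkage if for every $(d+1)$-element subset $\tau\subseteq[n]\sqcup[\underline d]$, the union of the graphs $M_\sigma$ over all $d$-subsets $\sigma\subset\tau$ is a spanning tree on $\tau\sqcup[\bar d]$ in which every vertex of $[\bar d]$ has degree $2$. An $(n,d)$-matching stack is a collection of bijections (partial matchings) $M_{I,\bar J}$ between $I$ and $\bar J$, one for each pair $I\subseteq[n]$, $\bar J\subseteq[\bar d]$ with $|I|=|\bar J|$, viewed as subgraphs of the complete bipartite graph on $[n]\sqcup[\bar d]$. It is a matching left-semi-ensemble if (Closure) whenever $I'\subseteq I$, $\bar J'\subseteq\bar J$ and $M_{I,\bar J}$ contains a perfect matching between $I'$ and $\bar J'$, then $M_{I',\bar J'}\subseteq M_{I,\bar J}$; and (Left linkage) for all $I,\bar J$ with $|I|=|\bar J|+1$, the union of $M_{I',\bar J}$ over all $I'\subset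 I$ with $|I'|=|\bar J|$ is a spanning tree on $I\sqcup\bar J$ in which every vertex of $\bar J$ has degree $2$. The reduction of a pointed matching field is the matching stack defined by: for each $d$-subset $\sigma$, let $\bar\sigma=\{\bar j:\underline j\in\sigma\}$; then $M_{\sigma\cap[n],\,[\bar d]\setminus\bar\sigma}$ is the restriction of $M_\sigma$ to $\sigma\cap[n]$. (This is a bijection between pointed matching fields and matching stacks.) *)

(* Defs.v *)
From mathcomp Require Import all_boot.
Set Implicit Arguments. Unset Strict Implicit. Unset Printing Implicit Defensive.

Section Bip.
Variables U V : finType.

Definition is_pmatching (A : {set U}) (B : {set V}) (E : {set U * V}) : Prop :=
  E \subset setX A B /\
  (forall a, a \in A -> #|[set b | (a, b) \in E]| = 1) /\
  (forall b, b \in B -> #|[set a | (a, b) \in E]| = 1).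

Definition badj (E : {set U * V}) : rel (U + V) := fun x y =>
  match x, y with
  | inl u, inr v => (u, v) \in E
  | inr v, inl u => (u, v) \in E
  | _, _ => false
  end.

Definition bverts (A : {set U}) (B : {set V}) : {set U + V} :=
  [set (inl a : U + V) | a in A] :|: [set (inr b : U + V) | b in B].

Definition bacyclic (E : {set U * V}) : Prop :=
  ~ exists s : seq (U + V), [&& 2 < size s, uniq s & cycle (badj E) s].

Definition is_spanning_tree (A : {set U}) (B : {set V}) (E : {set U * V}) : Prop :=
  E \subset setX A B /\
  (forall x y, x \in bverts A B -> y \in bverts A B -> connect (badj E) x y) /\
  bacyclic E.

Definition right_deg2 (B : {set V}) (E : {set U * V}) : Prop :=
  forall b, b \in B -> #|[set a | (a, b) \in E]| = 2.
End Bip.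

(** * Pointed (n+d,d)-matching fields.
    Ground set [n] ⊔ [underline d] is ['I_n + 'I_d]; [bar d] is ['I_d]. *)
Definition gset (n d : nat) := ('I_n + 'I_d)%type.
Definition fidx (n d : nat) := {s : {set gset n d} | #|s| == d}.
Definition mfield (n d : nat) := {ffun fidx n d -> {set gset n d * 'I_d}}.

Definition fget n d (M : mfield n d) (s : {set gset n d}) : {set gset n d * 'I_d} :=
  match @insub _ (fun s : {set gset n d} => #|s| == d) (fidx n d) s with
  | Some k => M k | None => set0 end.

Definition is_pointed_mf n d (M : mfield n d) : Prop :=
  forall k : fidx n d,
    is_pmatching (val k) [set: 'I_d] (M k) /\
    (forall j : 'I_d, (inr j : gset n d) \in val k -> (inr j : gset n d, j) \in M k).

Definition is_linkage n d (M : mfield n d) : Prop :=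
  forall tau : {set gset n d}, #|tau| = d.+1 ->
    let G := \bigcup_(s : {set gset n d} | (s \subset tau) && (#|s| == d)) fget M s in
    is_spanning_tree tau [set: 'I_d] G /\ right_deg2 [set: 'I_d] G.

Definition sidx (n d : nat) := {p : {set 'I_n} * {set 'I_d} | #|p.1| == #|p.2|}.
Definition mstack (n d : nat) := {ffun sidx n d -> {set 'I_n * 'I_d}}.

Definition sget n d (S : mstack n d) (I : {set 'I_n}) (J : {set 'I_d}) : {set 'I_n * 'I_d} :=
  match @insub _ (fun p : {set 'I_n} * {set 'I_d} => #|p.1| == #|p.2|) (sidx n d) (I, J) with
  | Some k => S k | None => set0 end.

Definition is_mstack n d (S : mstack n d) : Prop :=
  forall k : sidx n d, is_pmatching (val k).1 (val k).2 (S k).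

Definition closure_ax n d (S : mstack n d) : Prop :=
  forall (I I' : {set 'I_n}) (J J' : {set 'I_d}),
    #|I| = #|J| -> I' \subset I -> J' \subset J ->
    (exists E : {set 'I_n * 'I_d}, E \subset sget S I J /\ is_pmatching I' J' E) ->
    sget S I' J' \subset sget S I J.

Definition left_linkage_ax n d (S : mstack n d) : Prop :=
  forall (I : {set 'I_n}) (J : {set 'I_d}), #|I| = #|J| + 1 ->
    let G := \bigcup_(I' : {set 'I_n} | (I' \subset I) && (#|I'| == #|J|)) sget S I' J in
    is_spanning_tree I J G /\ right_deg2 J G.

Definition is_left_semi_ensemble n d (S : mstack n d) : Prop :=
  is_mstack S /\ closure_ax S /\ left_linkage_ax S.

(** * Reduction: M_{σ∩[n], [bar d]∖bar σ} := restriction of M_σ to σ∩[n].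
    For the stack index (I,J), σ = I ⊔ underline([d] ∖ J). *)
Definition red_sigma n d (I : {set 'I_n}) (J : {set 'I_d}) : {set gset n d} :=
  [set (inl i : gset n d) | i in I] :|: [set (inr j : gset n d) | j in ~: J].

Definition reduction n d (M : mfield n d) : mstack n d :=
  [ffun k : sidx n d =>
     [set e : 'I_n * 'I_d | (inl e.1 : gset n d, e.2) \in fget M (red_sigma (val k).1 (val k).2)]].

(* Main.v *)
Require Import Defs.
From mathcomp Require Import all_boot zify.
Set Implicit Arguments. Unset Strict Implicit. Unset Printing Implicit Defensive.

Lemma card1_eq (T : finType) (X : {set T}) x y :
  #|X| = 1 -> x \in X -> y \in X -> x = y.
Proof. by move/eqP/cards1P=> [z ->]; rewrite !in_set1 => /eqP-> /eqP->. Qed.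

Lemma card1_ex (T : finType) (X : {set T}) : #|X| = 1 -> exists x, x \in X.
Proof. by move/eqP/cards1P=> [z ->]; exists z; rewrite in_set1. Qed.

Section Gen.
Variables U V : finType.
Implicit Types (A : {set U}) (B : {set V}) (E : {set U * V}).

Lemma badj_sym E : symmetric (badj E).
Proof. by case=> [u|v] [u'|v']. Qed.

Lemma pm_sub A B E a b : is_pmatching A B E -> (a, b) \in E -> (a \in A) && (b \in B).
Proof. by case=> /subsetP H _ ab; have := H _ ab; rewrite in_setX. Qed.

Lemma pm_uniqL A B E a b b' : is_pmatching A B E -> (a, b) \in E -> (a, b') \in E -> b = b'.
Proof.
move=> pm ab ab'; case/andP: (pm_sub pm ab) => aA _; case: pm => _ [H _].
by apply: (card1_eq (H _ aA)); rewrite inE.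
Qed.

Lemma pm_uniqR A B E a a' b : is_pmatching A B E -> (a, b) \in E -> (a', b) \in E -> a = a'.
Proof.
move=> pm ab ab'; case/andP: (pm_sub pm ab) => _ bB; case: pm => _ [_ H].
by apply: (card1_eq (H _ bB)); rewrite inE.
Qed.

Lemma pm_exL A B E a : is_pmatching A B E -> a \in A -> exists b, (a, b) \in E.
Proof. by case=> _ [H _] aA; case: (card1_ex (H _ aA)) => b; rewrite inE; exists b. Qed.

Lemma pm_exR A B E b : is_pmatching A B E -> b \in B -> exists a, (a, b) \in E.
Proof. by case=> _ [_ H] bB; case: (card1_ex (H _ bB)) => a; rewrite inE; exists a. Qed.

End Gen.

Lemma connect_ind (T : finType) (e : rel T) (P : T -> Prop) :
  (forall x y, e x y -> P x -> P y) -> forall x y, connect e x y -> P x -> P y.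
Proof.
move=> H x y /connectP [p pth ->]; elim: p x pth => //= z p IH x /andP[exz pth] Px.
exact: IH pth (H _ _ exz Px).
Qed.

Lemma connect_homo (T T' : finType) (e : rel T) (e' : rel T') (f : T -> T') :
  (forall x y, e x y -> e' (f x) (f y)) -> forall x y, connect e x y -> connect e' (f x) (f y).
Proof.
move=> H x y cxy; apply: (connect_ind (P := fun z => connect e' (f x) (f z))) cxy _ => //.
by move=> u v euv cu; apply: connect_trans cu (connect1 (H _ _ euv)).
Qed.

Lemma cycle_nbrs (T : eqType) (e : rel T) s x :
  cycle e s -> uniq s -> 2 < size s -> x \in s ->
  exists y w, [/\ y \in s, w \in s, y != w, e x y & e w x].
Proof.
move=> cs us ss /rot_to [i s' Hrot].
have cs' : cycle e (x :: s') by rewrite -Hrot rot_cycle.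
have us' : uniq (x :: s') by rewrite -Hrot rot_uniq.
have ss' : 2 < size (x :: s') by rewrite -Hrot size_rot.
have mem z : z \in x :: s' -> z \in s by rewrite -Hrot mem_rot.
case: s' Hrot cs' us' ss' mem => [|y [|z m]] //= Hrot cs' us' ss' mem.
rewrite rcons_path /= in cs'; case/and3P: cs' => exy _ ewx.
exists y, (last z m); split => //.
- by apply: mem; rewrite !inE eqxx orbT.
- by apply: mem; rewrite inE; have := mem_last z m; rewrite !inE => /orP[->|->]; rewrite ?orbT.
- move: us'; rewrite /= => /andP[_ /andP[ynm _]]; apply/eqP => eyl; move: ynm.
  by rewrite eyl; have := mem_last z m => ->.
- by case/andP: ewx.
Qed.

Lemma bvL (U V : finType) (A : {set U}) (B : {set V}) a :
  ((inl a : U + V) \in bverts A B) = (a \in A).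
Proof.
rewrite /bverts inE; apply/orP/idP => [[/imsetP [x xA [->]] //|/imsetP [x _] //]|aA].
by left; apply: imset_f.
Qed.

Lemma bvR (U V : finType) (A : {set U}) (B : {set V}) b :
  ((inr b : U + V) \in bverts A B) = (b \in B).
Proof.
rewrite /bverts inE; apply/orP/idP => [[/imsetP [x _] //|/imsetP [x xB [->]] //]|bB].
by right; apply: imset_f.
Qed.

Section Forest.
Variables U V : finType.
Variables (G E1 E2 : {set U * V}) (A : {set U}) (B : {set V}).
Hypotheses (acyG : bacyclic G) (s1 : E1 \subset G) (s2 : E2 \subset G)
  (pm1 : is_pmatching A B E1) (pm2 : is_pmatching A B E2).

Lemma forest_pm_sub : E1 \subset E2.
Proof.
apply/subsetP => -[a0 b0] e1; apply/negPn/negP => ne2.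
pose p1 a := odflt b0 [pick b | (a, b) \in E1].
pose q1 b := odflt a0 [pick a | (a, b) \in E1].
pose p2 a := odflt b0 [pick b | (a, b) \in E2].
pose q2 b := odflt a0 [pick a | (a, b) \in E2].
have p1P a : a \in A -> (a, p1 a) \in E1.
  move=> aA; rewrite /p1; case: pickP => [b //|H].
  by case: (pm_exL pm1 aA) => b; rewrite H.
have p2P a : a \in A -> (a, p2 a) \in E2.
  move=> aA; rewrite /p2; case: pickP => [b //|H].
  by case: (pm_exL pm2 aA) => b; rewrite H.
have q1P b : b \in B -> (q1 b, b) \in E1.
  move=> bB; rewrite /q1; case: pickP => [a //|H].
  by case: (pm_exR pm1 bB) => a; rewrite H.
have q2P b : b \in B -> (q2 b, b) \in E2.
  move=> bB; rewrite /q2; case: pickP => [a //|H].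
  by case: (pm_exR pm2 bB) => a; rewrite H.
pose g (x : U + V) : U + V := match x with
  | inl a => if a \in A then inr (p1 a) else x
  | inr b => if b \in B then inl (q2 b) else x end.
pose h (x : U + V) : U + V := match x with
  | inl a => if a \in A then inr (p2 a) else x
  | inr b => if b \in B then inl (q1 b) else x end.
have gK : cancel g h.
  case=> [a|b] /=.
    case aA: (a \in A) => /=; last by rewrite aA.
    have := pm_sub pm1 (p1P _ aA); case/andP=> _ ->.
    by rewrite (pm_uniqR pm1 (q1P _ _) (p1P _ aA)) // (andP (pm_sub pm1 (p1P _ aA))).2.
  case bB: (b \in B) => /=; last by rewrite bB.
  have := pm_sub pm2 (q2P _ bB); case/andP=> -> _.
  by rewrite (pm_uniqL pm2 (p2P _ _) (q2P _ bB)) // (andP (pm_sub pm2 (q2P _ bB))).1.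
have ginj : injective g := can_inj gK.
pose W := [pred x : U + V | match x with inl a => a \in A | inr b => b \in B end].
have gW x : x \in W -> g x \in W.
  case: x => [a|b]; rewrite !inE /= => H; rewrite H /=.
    by case/andP: (pm_sub pm1 (p1P _ H)).
  by case/andP: (pm_sub pm2 (q2P _ H)).
have a0A : a0 \in A by case/andP: (pm_sub pm1 e1).
set x0 : U + V := inl a0.
have oW : all (mem W) (orbit g x0).
  apply/allP => y; rewrite -fconnect_orbit => cy.
  apply: (connect_ind (P := fun z => z \in W)) cy _; last by rewrite inE.
  by move=> u v /eqP <-; apply: gW.
apply: acyG; exists (orbit g x0); apply/and3P; split.
- rewrite size_orbit; case E: (order g x0) => [|[|[|k]]] //.
  + by have := order_gt0 g x0; rewrite E.
  + by have := iter_order ginj x0; rewrite E /= /x0 a0A.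
  + have := iter_order ginj x0; rewrite E /= /x0 a0A.
    have b0B : p1 a0 \in B by case/andP: (pm_sub pm1 (p1P _ a0A)).
    rewrite /= b0B => -[eq0].
    have pb : p1 a0 = b0 by apply: (pm_uniqL pm1 (p1P _ a0A) e1).
    by move: (q2P _ b0B); rewrite eq0 pb (negbTE ne2).
- exact: orbit_uniq.
- apply: (sub_in_cycle (P := mem W)) (cycle_orbit ginj x0) => //.
  move=> u v; rewrite !inE; case: u => [a|b] Hu _ /eqP <-; rewrite /= Hu /=.
    by apply: (subsetP s1); apply: p1P.
  by apply: (subsetP s2); apply: q2P.
Qed.
End Forest.

Lemma forest_pm_uniq (U V : finType) (G E1 E2 : {set U * V}) A B :
  bacyclic G -> E1 \subset G -> E2 \subset G ->
  is_pmatching A B E1 -> is_pmatching A B E2 -> E1 = E2.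
Proof.
move=> acy s1 s2 p1 p2; apply/eqP; rewrite eqEsubset.
by rewrite (forest_pm_sub acy s1 s2 p1 p2) (forest_pm_sub acy s2 s1 p2 p1).
Qed.

Section Core.
Variables n d : nat.
Variables (tau : {set gset n d}) (I : {set 'I_n}) (J : {set 'I_d})
  (G : {set gset n d * 'I_d}) (ik : 'I_d -> 'I_n).
Hypotheses (hI : forall i, (inl i \in tau) = (i \in I))
  (hK : forall k, (inr k \in tau) = (k \notin J))
  (H2 : forall k, k \notin J -> forall x, ((x, k) \in G) = (x == inr k) || (x == inl (ik k)))
  (Hik : forall k, k \notin J -> ik k \in I)
  (H3 : forall k j, (inr k, j) \in G -> (j == k) && (k \notin J)).

Definition TG := [set e : 'I_n * 'I_d | ((inl e.1, e.2) \in G) && (e.2 \in J)].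

Definition phi (x : 'I_n + 'I_d) : gset n d + 'I_d :=
  match x with inl i => inl (inl i) | inr j => inr j end.

Lemma phi_inj : injective phi.
Proof. by case=> [i|j] [i'|j'] //= [->]. Qed.

Lemma phi_homo x y : badj TG x y -> badj G (phi x) (phi y).
Proof. by case: x y => [i|j] [i'|j'] //=; rewrite inE => /andP[]. Qed.

Lemma phi_bverts x : x \in bverts I J -> phi x \in bverts tau [set: 'I_d].
Proof.
by case: x => [i|j]; rewrite /= !(bvL, bvR) ?hI ?inE.
Qed.

Lemma core_tree : is_spanning_tree tau [set: 'I_d] G <-> is_spanning_tree I J TG.
Proof.
split.
- case=> Gsub [Gcon Gacy]; split; [|split].
  + apply/subsetP => -[i j]; rewrite inE /= => /andP[e jJ].
    have := subsetP Gsub _ e; rewrite in_setX /= hI => /andP[iI _].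
    by rewrite in_setX /= jJ iI.
  + move=> x y xB yB; have := Gcon _ _ (phi_bverts xB) (phi_bverts yB).
    pose P (z : gset n d + 'I_d) : Prop := match z with
      | inl (inl i) => connect (badj TG) x (inl i)
      | inl (inr k) => connect (badj TG) x (inl (ik k))
      | inr j => if j \in J then connect (badj TG) x (inr j)
                 else connect (badj TG) x (inl (ik j)) end.
    move=> cG; have: P (phi y).
      apply: (connect_ind (P := P)) cG _; last first.
        rewrite /P; clear P; case: x xB => [i|j] /=; first by rewrite connect0.
        by rewrite bvR => ->; rewrite connect0.
      have step u v : (u, v) \in G -> (P (inl u) <-> P (inr v)).
        case: u => [i|k] e /=.
          case vJ: (v \in J).
            have ev : badj TG (inl i) (inr v) by rewrite /= inE e vJ.
            split => C; first exact: connect_trans C (connect1 ev).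
            apply: connect_trans C (connect1 _); by rewrite badj_sym.
          by move: e; rewrite H2 ?vJ //= => /eqP [->].
        by case/andP: (H3 e) => /eqP -> /negbTE ->.
      move=> u v; case: u => [u|u]; case: v => [v|v] //= e; by have := step _ _ e; case.
    rewrite /P; clear P cG; by case: y yB => [i|j] //=; rewrite bvR => ->.
  + move=> [s /and3P [ss us cs]]; apply: Gacy; exists (map phi s).
    rewrite size_map ss (map_inj_uniq phi_inj) us /=.
    exact: (homo_cycle phi_homo).
- case=> Tsub [Tcon Tacy].
  have Gsub : G \subset setX tau [set: 'I_d].
    apply/subsetP => -[[i|k] j] e; rewrite in_setX inE andbT /=.
      case jJ: (j \in J).
        have : (i, j) \in TG by rewrite inE e jJ.
        by move/(subsetP Tsub); rewrite in_setX hI => /andP[].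
      by move: e; rewrite H2 ?jJ //= => /eqP [->]; rewrite hI Hik ?jJ.
    by case/andP: (H3 e) => _; rewrite hK.
  split; [exact Gsub|split].
  + have rep z : z \in bverts tau [set: 'I_d] ->
        exists2 w, w \in bverts I J & connect (badj G) (phi w) z.
      case: z => [[i|k]|j]; rewrite ?bvL ?bvR => zt.
      * exists (inl i); last exact: connect0.
        by rewrite bvL -hI.
      * have kJ : k \notin J by rewrite -hK.
        exists (inl (ik k)); first by rewrite bvL Hik.
        apply: (connect_trans (y := inr k)); apply: connect1 => /=; rewrite H2 //.
          by rewrite eqxx orbT.
        by rewrite eqxx.
      * case jJ: (j \in J).
          by exists (inr j); rewrite ?connect0 // bvR.
        exists (inl (ik j)); first by rewrite bvL Hik ?jJ.
        by apply: connect1 => /=; rewrite H2 ?jJ // eqxx orbT.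
    have csym := sym_connect_sym (badj_sym G).
    move=> x y /rep [w1 w1B c1] /rep [w2 w2B c2].
    rewrite csym in c1; apply: connect_trans c1 (connect_trans _ c2).
    exact: connect_homo phi_homo _ _ (Tcon _ _ w1B w2B).
  + move=> [s /and3P [ss us cs]]; apply: Tacy.
    have noK k : inl (inr k) \notin s.
      apply/negP => ks; have [y [w [ys ws yw exy ewx]]] := cycle_nbrs cs us ss ks.
      move: yw exy ewx; case: y ys => [y|y] ys //; case: w ws => [w|w] ws //=.
      by move=> yw /H3/andP[/eqP Ey _] /H3/andP[/eqP Ew _]; rewrite Ey Ew eqxx in yw.
    have noK2 k : k \notin J -> inr k \notin s.
      move=> kJ; apply/negP => ks; have [y [w [ys ws yw exy ewx]]] := cycle_nbrs cs us ss ks.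
      move: yw exy ewx; case: y ys => [y|y] ys //; case: w ws => [w|w] ws //=.
      rewrite !H2 // => yw /orP[/eqP Ey|/eqP Ey]; first by move: ys; rewrite Ey (negbTE (noK k)).
      move=> /orP[/eqP Ew|/eqP Ew]; first by move: ws; rewrite Ew (negbTE (noK k)).
      by rewrite Ey Ew eqxx in yw.
    pose Q := [pred z : gset n d + 'I_d | match z with
      | inl (inl _) => true | inl (inr _) => false | inr j => j \in J end].
    have allQ : all (mem Q) s.
      apply/allP => -[[i|k]|j] zs //=; first by rewrite (negbTE (noK k)) in zs.
      by apply/negPn/negP => jJ; rewrite (negbTE (noK2 _ jJ)) in zs.
    pose psi (z : gset n d + 'I_d) : 'I_n + 'I_d := match z with
      | inl (inl i) => inl i | inl (inr k) => inr k | inr j => inr j end.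
    have Es : map phi (map psi s) = s.
      rewrite -map_comp -[RHS]map_id; apply/eq_in_map => z zs.
      by have := allP allQ z zs; case: z {zs} => [[i|k]|j].
    exists (map psi s); rewrite size_map ss /=.
    rewrite -Es in us; rewrite (map_uniq us) /=.
    apply: (homo_cycle_in (P := mem Q)) allQ cs.
    move=> [[i|k]|j] [[i'|k']|j'] //=; rewrite ?inE //=.
      by move=> _ jJ e; rewrite e; apply: jJ.
    by move=> jJ _ e; rewrite e; apply: jJ.
Qed.

Lemma nbJ j : j \in J -> [set a | (a, j) \in G] = inl @: [set i | (i, j) \in TG].
Proof.
move=> jJ; apply/setP => -[i|k]; rewrite inE.
  by rewrite mem_imset ?inE /= ?jJ ?andbT //; move=> ? ? [].
apply/idP/imsetP => [/H3/andP[/eqP E kJ]|[? _] //]; by rewrite -E jJ in kJ.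
Qed.

Lemma nbK k : k \notin J -> [set a | (a, k) \in G] = [set inr k; inl (ik k)].
Proof. by move=> kJ; apply/setP => x; rewrite !inE H2. Qed.

Lemma core_deg : right_deg2 [set: 'I_d] G <-> right_deg2 J TG.
Proof.
split => H b bJ.
  by rewrite -(H b (in_setT b)) nbJ // card_imset //; move=> ? ? [].
case bJ': (b \in J); first by rewrite nbJ // card_imset //; [exact: H|move=> ? ? []].
by rewrite nbK ?bJ' // cards2.
Qed.
End Core.

Lemma sub_d1 (T : finType) (A B : {set T}) m :
  B \subset A -> #|A| = m.+1 -> #|B| = m -> exists2 x, x \in A & B = A :\ x.
Proof.
move=> BA cA cB; have : #|A :\: B| > 0 by rewrite cardsD (setIidPr BA) cA cB subSnn.
rewrite card_gt0 => /set0Pn [x]; rewrite inE => /andP[xB xA]; exists x => //.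
apply/eqP; rewrite eqEcard; apply/andP; split.
  by apply/subsetP => y yB; rewrite !inE (subsetP BA _ yB) andbT; apply: contraNneq xB => <-.
by have := cardsD1 x A; rewrite xA cA cB add1n => -[->].
Qed.

Lemma pm_del (U V : finType) (A : {set U}) (B : {set V}) E a b :
  is_pmatching A B E -> (a, b) \in E -> is_pmatching (A :\ a) (B :\ b) (E :\ (a, b)).
Proof.
move=> pm ab; have pm' := pm; case: pm' => Es [HA HB]; split; [|split].
- apply/subsetP => -[x y]; rewrite !inE => /andP[ne xy].
  case/andP: (pm_sub pm xy) => -> ->; rewrite !andbT.
  apply/andP; split; apply/eqP => Exy; subst.
    by rewrite (pm_uniqL pm xy ab) eqxx in ne.
  by rewrite (pm_uniqR pm xy ab) eqxx in ne.
- move=> x; rewrite !inE => /andP[xa xA]; rewrite -(HA _ xA); apply: eq_card => y.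
  by rewrite !inE xpair_eqE (negbTE xa).
- move=> y; rewrite !inE => /andP[yb yB]; rewrite -(HB _ yB); apply: eq_card => x.
  by rewrite !inE xpair_eqE (negbTE yb) andbF.
Qed.

Section MF.
Variables n d : nat.

Lemma inl_imset (X : {set 'I_n}) i : ((inl i : gset n d) \in inl @: X) = (i \in X).
Proof. by rewrite mem_imset //; move=> ? ? []. Qed.
Lemma inr_imset (X : {set 'I_d}) k : ((inr k : gset n d) \in inr @: X) = (k \in X).
Proof. by rewrite mem_imset //; move=> ? ? []. Qed.
Lemma inl_inr_imset (X : {set 'I_d}) i : ((inl i : gset n d) \in inr @: X) = false.
Proof. by apply/imsetP => -[]. Qed.
Lemma inr_inl_imset (X : {set 'I_n}) k : ((inr k : gset n d) \in inl @: X) = false.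
Proof. by apply/imsetP => -[]. Qed.

Lemma card_gset (s : {set gset n d}) :
  #|s| = #|[set i | inl i \in s]| + #|[set k | inr k \in s]|.
Proof.
have Es : s = [set inl i | i in [set i | inl i \in s]] :|: [set inr k | k in [set k | inr k \in s]].
  apply/setP => -[i|k]; rewrite inE ?inl_imset ?inr_imset ?inl_inr_imset ?inr_inl_imset inE //.
  by rewrite orbF.
rewrite {1}Es cardsU.
have -> : [set inl i | i in [set i | inl i \in s]] :&: [set (inr k : gset n d) | k in [set k | inr k \in s]] = set0.
  by apply/setP => x; rewrite !inE; apply/andP => -[/imsetP [? _ ->] /imsetP [? _]].
rewrite cards0 subn0 !card_imset //; first by move=> ? ? [].
by move=> ? ? [].
Qed.

Lemma red_inl (I : {set 'I_n}) (J : {set 'I_d}) i : (inl i \in red_sigma I J) = (i \in I).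
Proof. by rewrite /red_sigma inE inl_imset inl_inr_imset orbF. Qed.

Lemma red_inr (I : {set 'I_n}) (J : {set 'I_d}) k : (inr k \in red_sigma I J) = (k \notin J).
Proof. by rewrite /red_sigma inE inr_imset inr_inl_imset inE. Qed.

Lemma card_red (I : {set 'I_n}) (J : {set 'I_d}) m :
  #|I| = #|J| + m -> #|red_sigma I J| = d + m.
Proof.
move=> cIJ; rewrite card_gset.
have -> : [set i | inl i \in red_sigma I J] = I by apply/setP => i; rewrite in_set red_inl.
have -> : [set k | inr k \in red_sigma I J] = ~: J by apply/setP => k; rewrite in_set red_inr in_setC.
have := cardsC J; rewrite card_ord cIJ => E.
by rewrite addnAC E.
Qed.

Lemma red_eta (s : {set gset n d}) :
  s = red_sigma [set i | inl i \in s] [set k | inr k \notin s].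
Proof. by apply/setP => -[i|k]; rewrite ?red_inl ?red_inr !inE ?negbK. Qed.

Lemma fgetE (M : mfield n d) (s : {set gset n d}) (h : #|s| == d) : fget M s = M (exist _ s h).
Proof. by rewrite /fget insubT. Qed.

Lemma sgetE (S : mstack n d) (I : {set 'I_n}) (J : {set 'I_d}) (h : #|I| == #|J|) : sget S I J = S (exist _ (I, J) h).
Proof. by rewrite /sget insubT. Qed.

Lemma sget_pm (S : mstack n d) (I : {set 'I_n}) (J : {set 'I_d}) : is_mstack S -> #|I| = #|J| -> is_pmatching I J (sget S I J).
Proof. move=> mS /eqP h; rewrite (sgetE S h); exact: (mS (exist _ (I, J) h)). Qed.

Section Pointed.
Variable M : mfield n d.
Hypothesis pM : is_pointed_mf M.
Implicit Types (s : {set gset n d}) (I : {set 'I_n}) (J : {set 'I_d}).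

Lemma fget_pm s : #|s| = d -> is_pmatching s [set: 'I_d] (fget M s).
Proof. by move=> /eqP h; rewrite (fgetE M h); case: (pM (exist _ s h)). Qed.

Lemma fget_pt s k : #|s| = d -> inr k \in s -> (inr k, k) \in fget M s.
Proof. by move=> /eqP h; rewrite (fgetE M h); case: (pM (exist _ s h)) => _; apply. Qed.

Lemma fget_inr s k j : #|s| = d -> (inr k, j) \in fget M s -> (inr k \in s) && (j == k).
Proof.
move=> cs e; case/andP: (pm_sub (fget_pm cs) e) => ks _; rewrite ks /=.
by rewrite (pm_uniqL (fget_pm cs) e (fget_pt cs ks)).
Qed.

Lemma fget_inl s i j : #|s| = d -> (inl i, j) \in fget M s -> (inl i \in s) && (inr j \notin s).
Proof.
move=> cs e; case/andP: (pm_sub (fget_pm cs) e) => is_ _; rewrite is_ /=.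
by apply/negP => js; have := pm_uniqR (fget_pm cs) e (fget_pt cs js).
Qed.

Lemma redE I J : #|I| = #|J| ->
  sget (reduction M) I J = [set e | (inl e.1, e.2) \in fget M (red_sigma I J)].
Proof. by move=> /eqP h; rewrite (sgetE _ h) ffunE. Qed.

Lemma red_pm I J : #|I| = #|J| -> is_pmatching I J (sget (reduction M) I J).
Proof.
move=> h; have cs : #|red_sigma I J| = d by rewrite (card_red (m := 0)) ?addn0.
have pm := fget_pm cs; rewrite redE //; split; [|split].
- apply/subsetP => -[i j]; rewrite !inE /= => e.
  by case/andP: (fget_inl cs e); rewrite red_inl red_inr negbK => -> ->.
- move=> i iI; rewrite -(proj1 (proj2 pm) (inl i)) ?red_inl //; apply: eq_card => j.
  by rewrite !inE.
- move=> j jJ; rewrite -(proj2 (proj2 pm) j) ?inE //.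
  have -> : [set a | (a, j) \in fget M (red_sigma I J)] =
            inl @: [set a | (a, j) \in [set e | (inl e.1, e.2) \in fget M (red_sigma I J)]].
    apply/setP => -[i|k]; rewrite !inE.
      by rewrite mem_imset ?inE //; move=> ? ? [].
    apply/idP/imsetP => [e|[? _] //].
    by case/andP: (fget_inr cs e); rewrite red_inr => kJ /eqP ejk; rewrite -ejk jJ in kJ.
  by rewrite card_imset //; move=> ? ? [].
Qed.

Lemma red_mstack : is_mstack (reduction M).
Proof.
move=> [[I J] h] /=; have := red_pm (eqP h); by rewrite (sgetE _ h).
Qed.

End Pointed.
End MF.

Section Tau.
Variables (n d : nat) (hn : 0 < n) (M : mfield n d).
Hypothesis pM : is_pointed_mf M.
Variables (tau : {set gset n d}) (I : {set 'I_n}) (J : {set 'I_d}).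
Hypotheses (hI : forall i, (inl i \in tau) = (i \in I))
  (hK : forall k, (inr k \in tau) = (k \notin J)) (ctau : #|tau| = d.+1).

Definition Gt := \bigcup_(s : {set gset n d} | (s \subset tau) && (#|s| == d)) fget M s.
Definition St := reduction M.
Definition Tt := \bigcup_(I' : {set 'I_n} | (I' \subset I) && (#|I'| == #|J|)) sget St I' J.
Definition i0 : 'I_n := Ordinal hn.
Definition ik k := odflt i0 [pick i | (inl i, k) \in fget M (tau :\ inr k)].

Lemma cIJ : #|I| = #|J| + 1.
Proof.
have := card_gset tau; rewrite ctau.
have -> : [set i | inl i \in tau] = I by apply/setP => i; rewrite in_set hI.
have -> : [set k | inr k \in tau] = ~: J by apply/setP => k; rewrite in_set hK in_setC.
have := cardsC J; rewrite card_ord => E1 E2.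
move: E1 E2; set x := #|~: J| => E1 E2.
move: E1 E2; set y := #|J|; set z := #|I| => E1 E2.
lia.
Qed.

Lemma c_del x : x \in tau -> #|tau :\ x| = d.
Proof. by move=> xt; have := cardsD1 x tau; rewrite xt ctau add1n => -[]. Qed.

Lemma memG e : reflect (exists2 x, x \in tau & e \in fget M (tau :\ x)) (e \in Gt).
Proof.
apply: (iffP bigcupP) => [[s /andP [st /eqP cs] es]|[x xt ex]].
  have [x xt Es] := sub_d1 st ctau cs; exists x => //; by rewrite -Es.
by exists (tau :\ x) => //; rewrite subD1set /= c_del.
Qed.

Lemma tau_inl i : i \in I -> tau :\ inl i = red_sigma (I :\ i) J.
Proof. by move=> iI; apply/setP => -[i'|k]; rewrite in_setD1 ?red_inl ?red_inr ?hI ?hK ?inE. Qed.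

Lemma tau_inr k : k \notin J -> tau :\ inr k = red_sigma I (k |: J).
Proof. by move=> kJ; apply/setP => -[i'|k']; rewrite in_setD1 ?red_inl ?red_inr ?hI ?hK ?inE //= negb_or. Qed.


Lemma I_ne : exists i, i \in I.
Proof. by apply/set0Pn; rewrite -card_gt0 cIJ addn1. Qed.

Lemma cID x : x \in I -> #|I :\ x| = #|J|.
Proof. by move=> xI; have := cardsD1 x I; rewrite xI cIJ addn1 add1n => -[]. Qed.

Lemma cIK k : k \notin J -> #|I| = #|k |: J|.
Proof. by move=> kJ; rewrite cardsU1 kJ cIJ addn1. Qed.

Lemma ikP k : k \notin J -> (inl (ik k), k) \in fget M (tau :\ inr k).
Proof.
move=> kJ; have kt : inr k \in tau by rewrite hK.
have cs := c_del kt; have pm := fget_pm pM cs.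
have [[a|k'] ea] := pm_exR pm (in_setT k).
  by rewrite /ik; case: pickP => [i' //| H]; rewrite H in ea.
case/andP: (fget_inr pM cs ea) => kt' /eqP Ek; subst k'.
by rewrite in_setD1 eqxx in kt'.
Qed.

Lemma Hik k : k \notin J -> ik k \in I.
Proof.
move=> kJ; have kt : inr k \in tau by rewrite hK.
case/andP: (pm_sub (fget_pm pM (c_del kt)) (ikP kJ)); rewrite in_setD1 hI.
by case/andP.
Qed.

Lemma H2t k : k \notin J -> forall x, ((x, k) \in Gt) = (x == inr k) || (x == inl (ik k)).
Proof.
move=> kJ x; have kt : inr k \in tau by rewrite hK.
apply/memG/orP => [[y yt e]|].
  have cs := c_del yt; have pm := fget_pm pM cs.
  case: (eqVneq y (inr k)) => [Ey|ny].
    by subst y; right; apply/eqP; exact: pm_uniqR pm e (ikP kJ).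
  have kty : inr k \in tau :\ y by rewrite in_setD1 eq_sym ny kt.
  by left; apply/eqP; exact: pm_uniqR pm e (fget_pt pM cs kty).
case=> /eqP ->.
  have [i iI] := I_ne; exists (inl i); first by rewrite hI.
  by apply: fget_pt => //; [apply: c_del; rewrite hI | rewrite in_setD1 kt].
by exists (inr k) => //; exact: ikP.
Qed.

Lemma H3t k j : (inr k, j) \in Gt -> (j == k) && (k \notin J).
Proof.
case/memG => x xt e; case/andP: (fget_inr pM (c_del xt) e).
by rewrite in_setD1 hK => /andP[_ ->] ->.
Qed.

Lemma link_iff : (is_spanning_tree tau [set: 'I_d] Gt /\ right_deg2 [set: 'I_d] Gt) <->
  (is_spanning_tree I J (TG J Gt) /\ right_deg2 J (TG J Gt)).
Proof.
have T1 := core_tree hI hK H2t Hik H3t.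
have T2 := core_deg H2t H3t.
by split => -[A B]; split; [apply/T1|apply/T2|apply/T1|apply/T2].
Qed.

Lemma sget_T x : x \in I -> sget St (I :\ x) J \subset Tt.
Proof. by move=> xI; apply: (bigcup_sup (I :\ x)); rewrite subD1set cID ?eqxx. Qed.

Lemma T_sub : Tt \subset TG J Gt.
Proof.
apply/subsetP => -[i j] /bigcupP [I' /andP [I'I /eqP cI'] e].
have [x xI EI] := sub_d1 I'I (etrans cIJ (addn1 _)) cI'.
have jJ : j \in J by case/andP: (pm_sub (red_pm pM cI') e).
rewrite inE /= jJ andbT; apply/memG; exists (inl x); first by rewrite hI.
by rewrite tau_inl //; move: e; rewrite redE // -EI inE.
Qed.

Lemma TG_cases i j : (i, j) \in TG J Gt ->
  (exists2 x, x \in I & (i, j) \in sget St (I :\ x) J) \/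
  (exists2 k, k \notin J & (i, j) \in sget St I (k |: J)).
Proof.
rewrite inE /= => /andP [/memG [[x|k] xt e] jJ].
  rewrite hI in xt; left; exists x => //.
  by rewrite redE ?cID // inE -tau_inl.
rewrite hK in xt; right; exists k => //.
by rewrite redE -?cIK // inE -tau_inr.
Qed.

Lemma degT j : j \in J -> exists a b, [/\ a != b, (a, j) \in Tt & (b, j) \in Tt].
Proof.
move=> jJ; have [x xI] := I_ne.
have pm1 := red_pm pM (cID xI); have [a ea] := pm_exR pm1 jJ.
have /andP[aIx _] := pm_sub pm1 ea; move: (aIx); rewrite in_setD1 => /andP[ax aI].
have pm2 := red_pm pM (cID aI); have [b eb] := pm_exR pm2 jJ.
have /andP[bIa _] := pm_sub pm2 eb; move: (bIa); rewrite in_setD1 => /andP[ba bI].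
exists a, b; split; first by rewrite eq_sym.
  exact: (subsetP (sget_T xI)).
exact: (subsetP (sget_T aI)).
Qed.

Lemma TG_deg : right_deg2 J (TG J Gt) -> TG J Gt = Tt.
Proof.
move=> D; apply/eqP; rewrite eqEsubset T_sub andbT; apply/subsetP => -[i j] e.
have jJ : j \in J by move: e; rewrite inE => /andP[].
have [a [b [ab ea eb]]] := degT jJ.
have sub2 : [set a; b] \subset [set a' | (a', j) \in TG J Gt].
  by apply/subsetP => y; rewrite in_set2 in_set => /orP[]/eqP->; apply: (subsetP T_sub).
have : [set a; b] == [set a' | (a', j) \in TG J Gt].
  by rewrite eqEcard sub2 cards2 ab D.
move/eqP/setP/(_ i); rewrite in_set2 in_set e => /orP[]/eqP->//.
Qed.

Lemma TG_clos : closure_ax St -> TG J Gt = Tt.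
Proof.
move=> C; apply/eqP; rewrite eqEsubset T_sub andbT; apply/subsetP => -[i j] e.
have jJ : j \in J by move: e; rewrite inE => /andP[].
case: (TG_cases e) => [[x xI e']|[k kJ e']]; first exact: (subsetP (sget_T xI)).
have cK := cIK kJ; have pmK := red_pm pM cK.
have [c ec] := pm_exR pmK (setU11 k J).
have /andP[cI _] := pm_sub pmK ec.
have pmE := pm_del pmK ec; rewrite setU1K // in pmE.
have sub : sget St (I :\ c) J \subset sget St I (k |: J).
  apply: C => //; [exact: subD1set|exact: subsetUr|].
  by exists (sget St I (k |: J) :\ (c, k)); split => //; exact: subD1set.
have ic : i != c.
  apply/eqP => Eic; subst c; have := pm_uniqL pmK e' ec => Ejk.
  by rewrite -Ejk jJ in kJ.
have pmC := red_pm pM (cID cI).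
have /andP[iI _] := pm_sub pmK e'.
have iIc : i \in I :\ c by rewrite in_setD1 ic iI.
have [j' ej'] := pm_exL pmC iIc.
have Ej : j' = j by apply: (pm_uniqL pmK (subsetP sub _ ej') e').
by subst j'; exact: (subsetP (sget_T cI)).
Qed.

End Tau.

Section Final.
Variables (n d : nat).
Implicit Types (I : {set 'I_n}) (J : {set 'I_d}) (s : {set gset n d}).

Lemma closure_step (S : mstack n d) : is_mstack S ->
  (forall I J i j, #|I| = #|J| -> (i, j) \in sget S I J ->
     sget S (I :\ i) (J :\ j) \subset sget S I J) -> closure_ax S.
Proof.
move=> mS step I I' J J' cIJ sI sJ [E [ES pmE]].
have base : forall I J, #|I| = #|J| -> I \subset I' -> J' \subset J ->
    E \subset sget S I J -> sget S I' J' \subset sget S I J.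
  move=> I1 J1 c1 s1 s2 s3.
  have pm1 := sget_pm mS c1.
  have EJ : J1 = J'.
    apply/eqP; rewrite eqEsubset s2 andbT; apply/subsetP => j jJ.
    have [i ei] := pm_exR pm1 jJ; have /andP[iI _] := pm_sub pm1 ei.
    have [j' ej'] := pm_exL pmE (subsetP s1 _ iI).
    have := pm_uniqL pm1 ei (subsetP s3 _ ej') => ->.
    by case/andP: (pm_sub pmE ej').
  have EI : I1 = I'.
    apply/eqP; rewrite eqEsubset s1 /=; apply/subsetP => i iI.
    have [j ej] := pm_exL pmE iI; have /andP[_ jJ] := pm_sub pmE ej.
    by case/andP: (pm_sub pm1 (subsetP s3 _ ej)).
  by rewrite EI EJ.
move: (leqnn #|I :\: I'|); move: {2}#|I :\: I'| => m.
elim: m I J cIJ sI sJ ES => [|m IH] I1 J1 c1 s1 s2 s3 hm.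
  apply: base => //; apply/subsetP => i iI; apply/negPn/negP => iI'.
  have : #|I1 :\: I'| > 0 by rewrite card_gt0; apply/set0Pn; exists i; rewrite inE iI' iI.
  by rewrite leqn0 in hm; rewrite (eqP hm).
case: (boolP (I1 \subset I')) => [sub|]; first exact: base.
case/subsetPn => i iI iI'.
have pm1 := sget_pm mS c1; have [j ej] := pm_exL pm1 iI.
have jJ' : j \notin J'.
  apply/negP => jJ'; have [i' ei'] := pm_exR pmE jJ'.
  have := pm_uniqR pm1 (subsetP s3 _ ei') ej => Ei.
  by case/andP: (pm_sub pmE ei'); rewrite Ei (negbTE iI').
have /andP[_ jJ] := pm_sub pm1 ej.
have sst := step _ _ _ _ c1 ej.
have sst0 := sst; apply: subset_trans sst0.
have c2 : #|I1 :\ i| = #|J1 :\ j|.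
  by move: (cardsD1 i I1) (cardsD1 j J1); rewrite iI jJ c1 => -> [].
have pm2 := sget_pm mS c2.
apply: IH => //.
- by apply/subsetP => x xI; rewrite in_setD1 (subsetP s1 _ xI) andbT; apply: contraNneq iI' => <-.
- by apply/subsetP => x xJ; rewrite in_setD1 (subsetP s2 _ xJ) andbT; apply: contraNneq jJ' => <-.
- apply/subsetP => -[a b] eab.
  have /andP[aI' bJ'] := pm_sub pmE eab.
  have ai : a != i by apply: contraNneq iI' => <-.
  have aIi : a \in I1 :\ i by rewrite in_setD1 ai (subsetP s1).
  have [b' eb'] := pm_exL pm2 aIi.
  have := pm_uniqL pm1 (subsetP sst _ eb') (subsetP s3 _ eab) => Eb.
  by rewrite -Eb.
- have E1 : (I1 :\ i) :\: I' = (I1 :\: I') :\ i.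
    by apply/setP => x; rewrite !inE; case: (x == i); case: (x \in I'); case: (x \in I1).
  have := cardsD1 i (I1 :\: I'); rewrite inE iI' iI -E1 /= => E2.
  by move: hm; rewrite E2.
Qed.


Lemma cardIJ s : #|s| = d -> #|[set i | inl i \in s]| = #|[set k | inr k \notin s]|.
Proof.
move=> cs; have := card_gset s; rewrite cs.
have -> : [set k | inr k \notin s] = ~: [set k | inr k \in s].
  by apply/setP => k; rewrite !inE.
have := cardsC [set k | inr k \in s]; rewrite card_ord.
set x := #|~: _|; set y := #|[set k | _]|; set z := #|[set i | _]| => E1 E2; lia.
Qed.

Section P1.
Hypothesis hn : 0 < n.
Variable M : mfield n d.
Hypothesis pM : is_pointed_mf M.

Lemma part1a : is_linkage M -> is_left_semi_ensemble (reduction M).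
Proof.
move=> L; have mS := red_mstack pM.
have LT : forall I J, #|I| = #|J| + 1 ->
    [/\ is_spanning_tree I J (TG J (Gt M (red_sigma I J))),
        right_deg2 J (TG J (Gt M (red_sigma I J))) &
        TG J (Gt M (red_sigma I J)) = Tt M I J].
  move=> I J cIJ.
  have hI i : (inl i \in red_sigma I J) = (i \in I) by rewrite red_inl.
  have hK k : (inr k \in red_sigma I J) = (k \notin J) by rewrite red_inr.
  have ct : #|red_sigma I J| = d.+1 by rewrite (card_red cIJ) addn1.
  have [T1 T2] := proj1 (link_iff hn pM hI hK ct) (L _ ct).
  by split => //; apply: TG_deg.
split => //; split.
  apply: closure_step => // I J i j cIJ e.
  have pm := red_pm pM cIJ; have /andP[iI jJ] := pm_sub pm e.
  have c2 : #|I| = #|J :\ j| + 1 by move: (cardsD1 j J); rewrite jJ cIJ add1n addn1.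
  have [[_ [_ acy]] _ ET] := LT _ _ c2.
  have hI x : (inl x \in red_sigma I (J :\ j)) = (x \in I) by rewrite red_inl.
  have hK k : (inr k \in red_sigma I (J :\ j)) = (k \notin J :\ j) by rewrite red_inr.
  have ct : #|red_sigma I (J :\ j)| = d.+1 by rewrite (card_red c2) addn1.
  have pmE := pm_del pm e.
  have sA : sget (reduction M) (I :\ i) (J :\ j) \subset TG (J :\ j) (Gt M (red_sigma I (J :\ j))).
    by rewrite ET; exact: (sget_T hn M hI hK ct iI).
  have sE : sget (reduction M) I J :\ (i, j) \subset TG (J :\ j) (Gt M (red_sigma I (J :\ j))).
    apply/subsetP => -[a b] eab; have /andP[_ bJ] := pm_sub pmE eab.
    rewrite inE /= bJ andbT; apply/(memG M ct); exists (inr j).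
      by rewrite red_inr in_setD1 eqxx.
    rewrite (tau_inr hI hK) ?in_setD1 ?eqxx // setD1K //.
    by move: eab; rewrite in_setD1 redE // inE => /andP[].
  have pmA := red_pm pM (etrans (cID hn hI hK ct iI) (erefl _)).
  rewrite (forest_pm_uniq acy sA sE pmA pmE); exact: subD1set.
move=> I J cIJ; have [T1 T2 ET] := LT _ _ cIJ.
rewrite ET in T1 T2; exact: (conj T1 T2).
Qed.

Lemma part1b : is_left_semi_ensemble (reduction M) -> is_linkage M.
Proof.
move=> [mS [C LL]] tau ct.
pose I := [set i | inl i \in tau]; pose J := [set k | inr k \notin tau].
have hI i : (inl i \in tau) = (i \in I) by rewrite inE.
have hK k : (inr k \in tau) = (k \notin J) by rewrite inE negbK.
have cIJ := cIJ hn hI hK ct.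
have [T1 T2] := LL I J cIJ.
have ET := TG_clos hn pM hI hK ct C.
have := proj2 (link_iff hn pM hI hK ct); rewrite ET => H.
exact: H (conj T1 T2).
Qed.

End P1.

Lemma fget_inr_eq (M : mfield n d) s k j : is_pointed_mf M -> #|s| = d ->
  ((inr k, j) \in fget M s) = (inr k \in s) && (j == k).
Proof.
move=> pM cs; apply/idP/idP; first exact: fget_inr.
by case/andP => ks /eqP ->; apply: fget_pt.
Qed.

Lemma fget_inl_eq (M : mfield n d) s i j : is_pointed_mf M -> #|s| = d ->
  ((inl i, j) \in fget M s) = ((i, j) \in sget (reduction M) [set i | inl i \in s] [set k | inr k \notin s]).
Proof.
move=> pM cs; rewrite redE ?cardIJ // inE /=.
by rewrite -red_eta.
Qed.

Lemma part2 (M1 M2 : mfield n d) : is_pointed_mf M1 -> is_pointed_mf M2 ->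
  reduction M1 = reduction M2 -> M1 = M2.
Proof.
move=> p1 p2 ER; apply/ffunP => -[s h].
have cs : #|s| = d by apply/eqP.
rewrite -!fgetE; apply/setP => -[[i|k] j].
  by rewrite !fget_inl_eq // ER.
by rewrite !fget_inr_eq.
Qed.

Definition IS s := [set i | inl i \in s].
Definition JS s := [set k | inr k \notin s].

Definition mk_field (S : mstack n d) : mfield n d :=
  [ffun k : fidx n d => [set e : gset n d * 'I_d |
     match e.1 with
     | inl i => (i, e.2) \in sget S (IS (val k)) (JS (val k))
     | inr k' => (inr k' \in val k) && (e.2 == k') end]].

Lemma mk_pointed (S : mstack n d) : is_mstack S -> is_pointed_mf (mk_field S).
Proof.
move=> mS [s h]; have cs : #|s| = d by apply/eqP.
have pm := sget_pm mS (cardIJ cs).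
rewrite ffunE /=; split; last by move=> j js; rewrite inE /= js eqxx.
split; [|split].
- apply/subsetP => -[[i|k] j]; rewrite !inE /=.
    by move/(pm_sub pm)/andP => [iI _]; rewrite inE in iI; rewrite iI.
  by case/andP => ->.
- move=> [i|k] xs.
    rewrite -(proj1 (proj2 pm) i) ?inE //; apply: eq_card => j; by rewrite !inE.
  have -> : [set b | (inr k, b) \in [set e : gset n d * 'I_d | match e.1 with
     | inl i => (i, e.2) \in sget S (IS s) (JS s)
     | inr k' => (inr k' \in s) && (e.2 == k') end]] = [set k].
    by apply/setP => b; rewrite !inE /= xs.
  exact: cards1.
- move=> b _; case bs: (inr b \in s).
    have -> : [set a | (a, b) \in [set e : gset n d * 'I_d | match e.1 with
     | inl i => (i, e.2) \in sget S (IS s) (JS s)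
     | inr k' => (inr k' \in s) && (e.2 == k') end]] = [set inr b].
      apply/setP => -[i|k]; rewrite !inE /=.
        apply/negbTE/negP => /(pm_sub pm)/andP[_]; by rewrite inE bs.
      apply/andP/eqP => [[_ /eqP ->]|[->]] //; by rewrite bs eqxx.
    exact: cards1.
  have bJ : b \in JS s by rewrite inE bs.
  have inlI : injective (fun i : 'I_n => (inl i : gset n d)) by move=> ? ? [].
  rewrite -(proj2 (proj2 pm) b bJ) -(card_imset _ inlI).
  apply: eq_card => -[i|k]; rewrite !inE /= ?inl_imset ?inr_inl_imset ?inE //.
  by apply/negbTE/negP => /andP[ks /eqP Ebk]; rewrite Ebk ks in bs.
Qed.

Lemma mk_red (S : mstack n d) : is_mstack S -> reduction (mk_field S) = S.
Proof.
move=> mS; apply/ffunP => -[[I J] h] /=.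
have c := eqP h.
have cs : #|red_sigma I J| = d by rewrite (card_red (m := 0)) ?addn0.
rewrite ffunE /= (fgetE _ (introT eqP cs)) ffunE /=.
have -> : IS (red_sigma I J) = I by apply/setP => i; rewrite inE red_inl.
have -> : JS (red_sigma I J) = J by apply/setP => k; rewrite inE red_inr negbK.
by apply/setP => -[i j]; rewrite !inE /= (sgetE _ h).
Qed.

End Final.

Theorem main_thm (n d : nat) (hn : 0 < n) (hd : 0 < d) :
  (forall M : mfield n d, is_pointed_mf M ->
     (is_linkage M <-> is_left_semi_ensemble (reduction M))) /\
  (forall M1 M2 : mfield n d, is_pointed_mf M1 -> is_pointed_mf M2 ->
     is_linkage M1 -> is_linkage M2 -> reduction M1 = reduction M2 -> M1 = M2) /\
  (forall S : mstack n d, is_left_semi_ensemble S ->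
     exists M : mfield n d, [/\ is_pointed_mf M, is_linkage M & reduction M = S]).
Proof.
split; [|split].
- by move=> M pM; split; [apply: part1a|apply: part1b].
- by move=> M1 M2 p1 p2 _ _; apply: part2.
- move=> S LS; have mS := LS.1.
  exists (mk_field S); have pM := mk_pointed mS; have ER := mk_red mS.
  split => //; apply: part1b hn _ pM _; by rewrite ER.
Qed.


Theorem mainTheorem4 (n d : nat) (hn : 0 < n) (hd : 0 < d) :
  (forall M : mfield n d, is_pointed_mf M ->
     (is_linkage M <-> is_left_semi_ensemble (reduction M))) /\
  (forall M1 M2 : mfield n d, is_pointed_mf M1 -> is_pointed_mf M2 ->
     is_linkage M1 -> is_linkage M2 -> reduction M1 = reduction M2 -> M1 = M2) /\
  (forall S : mstack n d, is_left_semi_ensemble S ->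
     exists M : mfield n d, [/\ is_pointed_mf M, is_linkage M & reduction M = S]).
Proof. exact: main_thm. Qed.
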